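(* In the discrete setting of the context, let $\varphi$ be a twice continuously differentiable convex function on $(0,+\infty)$, let $(\rho_K^n)_{K\in\mathcal M,0\le n\le N}$ be positive, $\rho_\sigma^n$ face densities and $u_{K,\sigma}^n$ normal velocities, $F_{K,\sigma}^n=|\sigma|\rho_\sigma^nu_{K,\sigma}^n$, and define for $K\in\mathcal M$, $0\le n\le N-1$, \[ |K|\,R_K^{n+1}=\bigl(\varphi'(\rho_K^{n+1})-\varphi'(\rho_K^n)\bigr)\sum_{\sigma\in\mathcal{E}(K)}F_{K,\sigma}^n. \] Let $M>1$ and suppose $\rho_K^n\le M$, $1/\rho_K^n\le M$ and $|u_{K,\sigma}^n|\le M$ for all $K$, $\sigma\in\mathcal{E}(K)$, $0\le n\le N$. Let $|\varphi''|_\infty$ be the maximum of $\varphi''$ on $[1/M,M]$. Then \[ \|R\|_{L^1}:=\sum_{n=0}^{N-1}\delta t\sum_{K\in\mathcal M}|K|\,|R_K^{n+1}|\le M^2\,|\varphi''|_\infty\,\|\rho\|_{t,BV}\,\frac{\delta t}{\underline h_{\mathcal M}}. \]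
   Context: Setting: $\Omega\subset\mathbb{R}^d$ bounded, $\mathcal M$ a polytopal mesh with cells $K$, faces of $K$ denoted $\mathcal E(K)$, measures $|K|$, $|\sigma|$; uniform time step $\delta t$, times $t_n$, $0\le n\le N$. $\underline h_{\mathcal M}=\min_{K\in\mathcal M}|K|/\sum_{\sigma\in\mathcal{E}(K)}|\sigma|$. Time BV semi-norm: $\|z\|_{t,BV}=\sum_{n=0}^{N-1}\sum_{K\in\mathcal M}|K|\,|z_K^{n+1}-z_K^n|$. *)

(* Defs.v *)
From HB Require Import structures.
From mathcomp Require Import all_boot all_order all_algebra.
From mathcomp Require Import all_classical all_reals all_analysis.
Set Implicit Arguments. Unset Strict Implicit. Unset Printing Implicit Defensive.
Import Order.TTheory GRing.Theory Num.Theory numFieldNormedType.Exports.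
Local Open Scope ring_scope.

(* Discrete mesh: cells of type [cell], faces of type [face], E K = faces of K,
   vol K = |K|, area s = |sigma|. *)

Definition C2_pos {R : realType} (phi : R -> R) : Prop :=
  (forall x : R, 0 < x -> derivable phi x 1) /\
  (forall x : R, 0 < x -> derivable (derive1 phi) x 1) /\
  (forall x : R, 0 < x -> {for x, continuous (derive1 (derive1 phi) : R -> R)}).

Definition convex_pos {R : realType} (phi : R -> R) : Prop :=
  forall x y t : R, 0 < x -> 0 < y -> 0 <= t <= 1 ->
    phi (t * x + (1 - t) * y) <= t * phi x + (1 - t) * phi y.

Definition hmin {R : realType} {cell face : finType} (K0 : cell)
  (E : cell -> {set face}) (vol : cell -> R) (area : face -> R) : R :=
  \big[Num.min/(vol K0 / \sum_(s in E K0) area s)]_(K : cell)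
      (vol K / \sum_(s in E K) area s).

Definition flux {R : realType} {cell face : finType} (area : face -> R)
  (rhos : nat -> face -> R) (u : nat -> cell -> face -> R)
  (n : nat) (K : cell) (s : face) : R :=
  area s * rhos n s * u n K s.

(* R_K^{n+1} defined by |K| R_K^{n+1} = (phi'(rho_K^{n+1}) - phi'(rho_K^n)) sum F *)
Definition resid {R : realType} {cell face : finType} (phi : R -> R)
  (E : cell -> {set face}) (vol : cell -> R) (area : face -> R)
  (rho : nat -> cell -> R) (rhos : nat -> face -> R)
  (u : nat -> cell -> face -> R) (n : nat) (K : cell) : R :=
  ((derive1 phi) (rho n.+1 K) - (derive1 phi) (rho n K)) *
    (\sum_(s in E K) flux area rhos u n K s) / vol K.

Definition resid_L1 {R : realType} {cell face : finType} (phi : R -> R)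
  (E : cell -> {set face}) (vol : cell -> R) (area : face -> R)
  (rho : nat -> cell -> R) (rhos : nat -> face -> R)
  (u : nat -> cell -> face -> R) (N : nat) (dt : R) : R :=
  \sum_(n < N) dt * \sum_(K : cell) vol K * `|resid phi E vol area rho rhos u n K|.

Definition tBV {R : realType} {cell : finType} (vol : cell -> R)
  (z : nat -> cell -> R) (N : nat) : R :=
  \sum_(n < N) \sum_(K : cell) vol K * `|z n.+1 K - z n K|.

(* Main.v *)
Require Import Defs.
From HB Require Import structures.
From mathcomp Require Import all_boot all_order all_algebra.
From mathcomp Require Import all_classical all_reals all_analysis.
From mathcomp Require Import ring lra.
Import Order.TTheory GRing.Theory Num.Theory numFieldNormedType.Exports.
Local Open Scope classical_set_scope.
Local Open Scope ring_scope.
Lemma tangent_le (R : realType) (phi : R -> R) (x y : R) :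
  0 < x -> 0 < y -> derivable phi x 1 -> convex_pos phi ->
  derive1 phi x * (y - x) <= phi y - phi x.
Proof.
move=> x0 y0 d1 cvx.
set v := y - x.
have dfx : differentiable phi x by apply/derivable1_diffP.
have dv : derivable phi x v by apply: diff_derivable.
have Dv : 'D_v phi x = derive1 phi x * v.
  rewrite deriveE // deriv1E //= mulrC.
  by [].
set g := (fun h : R => h^-1 *: ((phi \o shift x) (h *: v) - phi x)).
have gl : g @ 0^' --> 'D_v phi x by exact: dv.
have gr : g @ 0^'+ --> 'D_v phi x.
  apply: cvg_trans gl; apply: cvg_app; apply: within_subset => // z /= z0; by rewrite gt_eqF.
suff : 'D_v phi x <= phi y - phi x by rewrite Dv.
rewrite -(cvg_lim _ gr) //.
apply: limr_le; first by apply/cvg_ex; exists ('D_v phi x).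
near=> h.
have h0 : 0 < h by near: h; exact: nbhs_right_gt.
have h1 : h < 1 by near: h; exact: nbhs_right_lt.
rewrite /g /= /shift /=.
have := cvx y x h y0 x0.
rewrite ltW // ltW //= => /(_ isT) H.
have -> : h *: v + x = h * y + (1 - h) * x by rewrite /v /GRing.scale /=; ring.
change (h^-1 * (phi (h * y + (1 - h) * x) - phi x) <= phi y - phi x).
rewrite ler_pdivrMl //. nra.
Unshelve. all: by end_near. Qed.


Lemma dmono (R : realType) (phi : R -> R) (x y : R) :
  0 < x -> x <= y -> C2_pos phi -> convex_pos phi ->
  derive1 phi x <= derive1 phi y.
Proof.
move=> x0 xy [d1 _] cvx.
case: (eqVneq x y) => [->//|nxy].
have {nxy}xy' : x < y by rewrite lt_neqAle nxy.
have y0 : 0 < y by apply: lt_le_trans xy.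
have h1 := @tangent_le _ _ _ _ x0 y0 (d1 _ x0) cvx.
have h2 := @tangent_le _ _ _ _ y0 x0 (d1 _ y0) cvx.
rewrite -subr_ge0; have : 0 < y - x by rewrite subr_gt0.
move=> yx; rewrite -(pmulr_rge0 _ yx).
have -> : (y - x) * (derive1 phi y - derive1 phi x) =
  (- (derive1 phi y * (x - y))) - derive1 phi x * (y - x) by ring.
rewrite subr_ge0; apply: le_trans h1 _; rewrite lerNr opprB; exact: h2.
Qed.

Lemma dlip_ord (R : realType) (phi : R -> R) (M m a b : R) :
  C2_pos phi -> convex_pos phi -> 0 < 1 / M ->
  (forall x, 1 / M <= x <= M -> (derive1 (derive1 phi)) x <= m) ->
  1 / M <= b -> b <= a -> a <= M ->
  0 <= derive1 phi a - derive1 phi b <= m * (a - b).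
Proof.
move=> c2 cvx M0 hm bM ba aM.
have [d1 [d2 _]] := c2.
have b0 : 0 < b by apply: lt_le_trans bM.
rewrite subr_ge0 dmono //=.
have dd : forall z, z \in `]b, a[ -> is_derive z 1 (derive1 phi) (derive1 (derive1 phi) z).
  move=> z zi; rewrite derive1E; apply: derivableP; apply: d2.
  by apply: lt_trans b0 _; rewrite (itvP zi).
have cc : {within `[b, a], continuous (derive1 phi)}.
  apply: derivable_within_continuous => z zi; apply: d2.
  by apply: lt_le_trans b0 _; rewrite (itvP zi).
have [c ci ->] := MVT_segment ba dd cc.
apply: ler_wpM2r; first by rewrite subr_ge0.
apply: hm; apply/andP; split.
  by apply: le_trans bM _; rewrite (itvP ci).
by apply: le_trans aM; rewrite (itvP ci).
Qed.

Lemma dlip (R : realType) (phi : R -> R) (M m a b : R) :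
  C2_pos phi -> convex_pos phi -> 0 < 1 / M ->
  (forall x, 1 / M <= x <= M -> (derive1 (derive1 phi)) x <= m) ->
  1 / M <= a <= M -> 1 / M <= b <= M ->
  `|derive1 phi a - derive1 phi b| <= m * `|a - b|.
Proof.
move=> c2 cvx M0 hm /andP[a1 a2] /andP[b1 b2].
case: (leP b a) => ab.
  have /andP[h1 h2] := @dlip_ord _ _ _ _ _ _ c2 cvx M0 hm b1 ab a2.
  by rewrite ger0_norm // ger0_norm // subr_ge0.
have /andP[h1 h2] := @dlip_ord _ _ _ _ _ _ c2 cvx M0 hm a1 (ltW ab) b2.
rewrite distrC [`|a - b|]distrC.
by rewrite ger0_norm // ger0_norm // subr_ge0 ltW.
Qed.

Theorem lemma3p3 (R : realType) (cell face : finType) (K0 : cell)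
  (E : cell -> {set face}) (vol : cell -> R) (area : face -> R)
  (N : nat) (dt : R) (phi : R -> R)
  (rho : nat -> cell -> R) (rhos : nat -> face -> R)
  (u : nat -> cell -> face -> R) (M phi2max : R) :
  (forall K, 0 < vol K) ->
  (forall s, 0 < area s) ->
  (forall K, exists s, s \in E K) ->
  0 < dt ->
  C2_pos phi -> convex_pos phi ->
  (forall n K, (n <= N)%N -> 0 < rho n K) ->
  (* face densities are interpolates of cell densities *)
  (forall n K s, (n <= N)%N -> s \in E K ->
     exists L L' : cell, rho n L <= rhos n s <= rho n L') ->
  1 < M ->
  (forall n K, (n <= N)%N -> rho n K <= M /\ 1 / rho n K <= M) ->
  (forall n K s, (n <= N)%N -> s \in E K -> `|u n K s| <= M) ->
  (* phi2max = max of phi'' on [1/M, M] *)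
  (exists x, 1 / M <= x <= M /\ (derive1 (derive1 phi)) x = phi2max) ->
  (forall x, 1 / M <= x <= M -> (derive1 (derive1 phi)) x <= phi2max) ->
  resid_L1 phi E vol area rho rhos u N dt
    <= M ^+ 2 * phi2max * tBV vol rho N * (dt / hmin K0 E vol area).
Proof.
move=> vol0 area0 Ene dt0 c2 cvx rho0 rhos_int M1 rhoM uM _ hmax.
have M0 : 0 < M by apply: lt_trans M1.
have Mi0 : 0 < 1 / M by rewrite divr_gt0.
have rb n K : (n <= N)%N -> 1 / M <= rho n K <= M.
  move=> nN; have [h1 h2] := rhoM n K nN; have r0 := rho0 n K nN.
  rewrite h1 andbT ler_pdivrMr //.
  by move: h2; rewrite ler_pdivrMr // mulrC.
pose sK K := \sum_(s in E K) area s.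
have sK0 K : 0 < sK K.
  have [s sE] := Ene K.
  apply: (lt_le_trans (area0 s)); rewrite /sK (bigD1 s) //= lerDl.
  by apply: sumr_ge0 => i _; exact: ltW.
have h0 : 0 < hmin K0 E vol area.
  rewrite /hmin; apply: (big_ind (fun x => 0 < x)).
  - by apply: divr_gt0; [exact: vol0 | exact: sK0].
  - by move=> a b ha hb; rewrite lt_min ha hb.
  - by move=> K _; apply: divr_gt0; [exact: vol0 | exact: sK0].
have sKle K : sK K <= vol K / hmin K0 E vol area.
  have hle : hmin K0 E vol area <= vol K / sK K by apply: bigmin_le.
  rewrite ler_pdivlMr //; move: hle; rewrite ler_pdivlMr // mulrC //.
rewrite /resid_L1 /tBV mulr_sumr [X in _ <= X]mulrC mulr_sumr; apply: ler_sum => n _.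
rewrite mulr_sumr mulr_sumr mulr_sumr; apply: ler_sum => K _.
have nN : (n <= N)%N by apply: ltnW.
have nN1 : (n.+1 <= N)%N by [].
set D := derive1 phi (rho n.+1 K) - derive1 phi (rho n K).
set S := \sum_(s in E K) flux area rhos u n K s.
have eq : vol K * `|resid phi E vol area rho rhos u n K| = `|D| * `|S|.
  rewrite /resid -/D -/S normf_div (gtr0_norm (vol0 K)) normrM mulrC divfK //.
  by rewrite gt_eqF.
have HD : `|D| <= phi2max * `|rho n.+1 K - rho n K|.
  exact: dlip c2 cvx Mi0 hmax (rb _ _ nN1) (rb _ _ nN).
have HS : `|S| <= M ^+ 2 * sK K.
  apply: (le_trans (ler_norm_sum _ _ _)).
  rewrite /sK mulr_sumr; apply: ler_sum => s sE.
  rewrite /flux normrM normrM (gtr0_norm (area0 s)).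
  have [L [L' /andP[r1 r2]]] := rhos_int n K s nN sE.
  have rs0 : 0 < rhos n s by apply: lt_le_trans r1; exact: rho0.
  have rsM : `|rhos n s| <= M.
    rewrite gtr0_norm //; apply: le_trans r2 _; by have [] := rhoM n L' nN.
  have uMs := uM n K s nN sE.
  have -> : M ^+ 2 * area s = area s * M * M by rewrite expr2; ring.
  apply: ler_pM => //; first by rewrite mulr_ge0 // ltW.
  by apply: ler_wpM2l => //; exact: ltW.
have HP : 0 <= phi2max * `|rho n.+1 K - rho n K| by apply: le_trans HD.
rewrite eq.
have -> : (dt / hmin K0 E vol area) * (M ^+ 2 * phi2max * (vol K * `|rho n.+1 K - rho n K|))
  = dt * ((phi2max * `|rho n.+1 K - rho n K|) * (M ^+ 2 * (vol K / hmin K0 E vol area))).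
  by rewrite /= ; ring.
apply: ler_wpM2l; first exact: ltW.
apply: ler_pM => //.
apply: le_trans HS _; apply: ler_wpM2l; first exact: sqr_ge0.
exact: sKle.
Qed.
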